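(* Let $m\ge 2$ and let $\alpha_1,\dots,\alpha_m\in\mathbb{R}$ be algebraically independent over $\mathbb{Q}$; let $K=\mathbb{Q}(\alpha_1,\dots,\alpha_m)$ and $K^+=\{x\in K: x>0\}$. Then for every integer $n\ge 2$ there exist infinitely many different ways to write $K^+$ as a union of $n$ pairwise disjoint nonempty subsets, each closed under addition and multiplication. *)

(* Defs.v *)
From mathcomp Require Import all_boot all_algebra.
From mathcomp Require Import reals.
From mathcomp Require Import mpoly.
Set Implicit Arguments. Unset Strict Implicit. Unset Printing Implicit Defensive.
Import GRing.Theory Num.Theory.
Local Open Scope ring_scope.

Definition alg_indep_Q (R : realType) (m : nat) (alpha : 'I_m -> R) : Prop :=
  forall p : {mpoly rat[m]}, p != 0 -> (map_mpoly (@ratr R) p).@[alpha] != 0.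

Definition in_K (R : realType) (m : nat) (alpha : 'I_m -> R) (x : R) : Prop :=
  exists p q : {mpoly rat[m]},
    (map_mpoly (@ratr R) q).@[alpha] != 0 /\
    x = (map_mpoly (@ratr R) p).@[alpha] / (map_mpoly (@ratr R) q).@[alpha].

Definition in_Kplus (R : realType) (m : nat) (alpha : 'I_m -> R) (x : R) : Prop :=
  in_K alpha x /\ 0 < x.

Definition semiring_partition (R : realType) (S : R -> Prop) (n : nat)
    (A : 'I_n -> R -> Prop) : Prop :=
  [/\ forall x, S x <-> exists i, A i x,
      forall i j x, i != j -> A i x -> A j x -> False,
      forall i, exists x, A i x,
      forall i x y, A i x -> A i y -> A i (x + y)
    & forall i x y, A i x -> A i y -> A i (x * y)].

(* Two labelled families describe the same (unordered) decomposition iff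
   they have the same collection of blocks (as sets). *)
Definition same_blocks (R : Type) (n : nat) (A B : 'I_n -> R -> Prop) : Prop :=
  (forall i, exists j, forall x, A i x <-> B j x) /\
  (forall j, exists i, forall x, B j x <-> A i x).

(* Main.v *)
Require Import Defs.
From mathcomp Require Import all_boot all_algebra.
From mathcomp Require Import reals.
From mathcomp Require Import mpoly.
From mathcomp Require Import all_order lra ring zify.
Set Implicit Arguments. Unset Strict Implicit.
Import Order.TTheory GRing.Theory Num.Theory.
Local Open Scope ring_scope.

Lemma alg_wd (F : fieldType) (P1 Q1 Q2 D1 G1 G2 P2 D2 : F) :
  P1 != 0 -> Q1 != 0 -> Q2 != 0 ->
  P2 = P1 * Q2 / Q1 -> D2 = (D1 * Q2 + P1 * G2 - P2 * G1) / Q1 ->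
  D1 / P1 - G1 / Q1 = D2 / P2 - G2 / Q2.
Proof. move=> h1 h2 h3 -> ->. field. by rewrite h1 h2 h3. Qed.
Lemma alg_mul (F : fieldType) (P1 Q1 P2 Q2 D1 G1 D2 G2 : F) :
  P1 != 0 -> Q1 != 0 -> P2 != 0 -> Q2 != 0 ->
  (D1 * P2 + P1 * D2) / (P1 * P2) - (G1 * Q2 + Q1 * G2) / (Q1 * Q2)
  = D1 / P1 - G1 / Q1 + (D2 / P2 - G2 / Q2).
Proof. move=> h1 h2 h3 h4. field. by rewrite h1 h2 h3 h4. Qed.
Lemma alg_add (F : fieldType) (a P1 Q1 P2 Q2 D1 G1 D2 G2 : F) :
  P1 != 0 -> Q1 != 0 -> P2 != 0 -> Q2 != 0 -> P1 * Q2 + P2 * Q1 != 0 ->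
  P1 / Q1 + P2 / Q2 != 0 ->
  a * ((D1 * Q2 + P1 * G2 + (D2 * Q1 + P2 * G1)) / (P1 * Q2 + P2 * Q1)
       - (G1 * Q2 + Q1 * G2) / (Q1 * Q2))
  = (P1 / Q1) / (P1 / Q1 + P2 / Q2) * (a * (D1 / P1 - G1 / Q1))
    + (P2 / Q2) / (P1 / Q1 + P2 / Q2) * (a * (D2 / P2 - G2 / Q2)).
Proof. move=> h1 h2 h3 h4 h5 h6. field. by rewrite h1 h2 h3 h4 h5. Qed.

Lemma alg_S (F : fieldType) (P1 Q1 P2 Q2 : F) : Q1 != 0 -> Q2 != 0 ->
  P1 * Q2 + P2 * Q1 = (P1 / Q1 + P2 / Q2) * (Q1 * Q2).
Proof. move=> h1 h2. field. by rewrite h1 h2. Qed.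
Lemma alg_S2 (F : fieldType) (P1 Q1 P2 Q2 : F) : Q1 != 0 -> Q2 != 0 ->
  P1 / Q1 + P2 / Q2 = (P1 * Q2 + P2 * Q1) / (Q1 * Q2).
Proof. move=> h1 h2. field. by rewrite h1 h2. Qed.

Section C.
Variable R : realFieldType.
Definition Pos (U V : R) := 0 < V \/ (V = 0 /\ 0 < U).
Definition Cl (n i : nat) (U V : R) : Prop :=
  if i == 0%N then ~ Pos U V
  else [/\ Pos U V, (2 <= i)%N -> (i.-1)%:R * V < U & (i <= n - 2)%N -> U <= i%:R * V].

Lemma lin_lt (l mu a b c d t : R) : 0 < l -> 0 < mu -> t * b < a -> t * d < c ->
  t * (l * b + mu * d) < l * a + mu * c.
Proof. move=> hl hm h1 h2. have h1' : 0 < a - t * b by lra. have h2' : 0 < c - t * d by lra.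
have := mulr_gt0 hl h1'; have := mulr_gt0 hm h2'. lra. Qed.
Lemma lin_le (l mu a b c d t : R) : 0 < l -> 0 < mu -> a <= t * b -> c <= t * d ->
  l * a + mu * c <= t * (l * b + mu * d).
Proof. move=> hl hm h1 h2. have h1' : 0 <= t * b - a by lra. have h2' : 0 <= t * d - c by lra.
have := mulr_ge0 (ltW hl) h1'; have := mulr_ge0 (ltW hm) h2'. lra. Qed.

Lemma Pos_comb (l mu U1 V1 U2 V2 : R) : 0 < l -> 0 < mu -> Pos U1 V1 -> Pos U2 V2 ->
  Pos (l * U1 + mu * U2) (l * V1 + mu * V2).
Proof.
move=> hl hm [h1|[e1 h1]] [h2|[e2 h2]]; rewrite /Pos.
- left; have := mulr_gt0 hl h1; have := mulr_gt0 hm h2; lra.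
- left; rewrite e2 mulr0 addr0; exact: mulr_gt0.
- left; rewrite e1 mulr0 add0r; exact: mulr_gt0.
- right; rewrite e1 e2 !mulr0 addr0; split => //.
  have := mulr_gt0 hl h1; have := mulr_gt0 hm h2; lra.
Qed.

Lemma notPos (U V : R) : ~ Pos U V <-> (V < 0 \/ (V = 0 /\ U <= 0)).
Proof.
rewrite /Pos; split.
- move=> H; case: (ltrgtP V 0) => hV; [by left| |].
  + by exfalso; apply: H; left.
  + right; split; first by rewrite hV.
    rewrite leNgt; apply/negP => hU; apply: H; right; split => //; by rewrite hV.
- move=> [h|[e h]] [h'|[e' h']]; lra.
Qed.

Lemma Cl_comb n i (l mu U1 V1 U2 V2 : R) : 0 < l -> 0 < mu -> Cl n i U1 V1 -> Cl n i U2 V2 ->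
  Cl n i (l * U1 + mu * U2) (l * V1 + mu * V2).
Proof.
move=> hl hm; rewrite /Cl; case: eqP => _.
- move=> /notPos [h1|[e1 h1]] /notPos [h2|[e2 h2]]; apply/notPos.
  + left; have h1' : 0 < - V1 by rewrite oppr_gt0.
    have h2' : 0 < - V2 by rewrite oppr_gt0.
    have := mulr_gt0 hl h1'; have := mulr_gt0 hm h2'. lra.
  + left; rewrite e2 mulr0 addr0; rewrite pmulr_rlt0 //.
  + left; rewrite e1 mulr0 add0r; rewrite pmulr_rlt0 //.
  + right; rewrite e1 e2 !mulr0 addr0; split => //.
    have h1' : 0 <= - U1 by rewrite oppr_ge0.
    have h2' : 0 <= - U2 by rewrite oppr_ge0.
    have := mulr_ge0 (ltW hl) h1'; have := mulr_ge0 (ltW hm) h2'. lra.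
- move=> [p1 a1 b1] [p2 a2 b2]; split.
  + exact: Pos_comb.
  + move=> h; exact: lin_lt (a1 h) (a2 h).
  + move=> h; exact: lin_le (b1 h) (b2 h).
Qed.

Lemma Pos_ge0 (U V : R) : Pos U V -> 0 <= V.
Proof. by case=> [h|[-> _]]; [exact: ltW|]. Qed.

Lemma Cl_disj_lt n i j (U V : R) : (i < j)%N -> (j < n)%N -> Cl n i U V -> Cl n j U V -> False.
Proof.
move=> ij jn; rewrite /Cl; have -> : (j == 0%N) = false by case: j ij {jn}.
case: eqP => [_ nP [pj _ _] //|i0 [pi _ bi] [pj aj _]].
have hj : (2 <= j)%N by move/eqP: i0; lia.
have hi : (i <= n - 2)%N by lia.
have h1 := aj hj; have h2 := bi hi.
have hV := Pos_ge0 pj.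
have : i%:R * V <= (j.-1)%:R * V by apply: ler_wpM2r => //; rewrite ler_nat; lia.
lra.
Qed.

Lemma Cl_disj n i j (U V : R) : (i < n)%N -> (j < n)%N -> i != j -> Cl n i U V -> Cl n j U V -> False.
Proof.
move=> hi hj ij; case: (ltngtP i j) => h.
- by move=> a b; apply: (Cl_disj_lt h hj a b).
- by move=> a b; apply: (Cl_disj_lt h hi b a).
- by rewrite h eqxx in ij.
Qed.

Lemma Cl_cover n (U V : R) : (2 <= n)%N -> exists i, (i < n)%N /\ Cl n i U V.
Proof.
move=> n2.
have [hP|hP] : Pos U V \/ ~ Pos U V.
  rewrite /Pos; case: (boolP (0 < V)) => hV; first by left; left.
  case: (eqVneq V 0) => e; last first.
    by right; case=> [//|[h _]]; move: e; rewrite h eqxx.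
  case: (boolP (0 < U)) => hU; first by left; right.
  by right; case=> [//|[_ //]].
- pose P j := (n - 2 < j.+1)%N || (U <= (j.+1)%:R * V).
  have exP : exists j, P j by exists (n - 2)%N; rewrite /P; apply/orP; left; lia.
  case: (ex_minnP exP) => j Pj minj.
  have jn : (j <= n - 2)%N by apply: minj; rewrite /P; apply/orP; left; lia.
  exists j.+1; split; first by lia.
  rewrite /Cl /=; split => //.
  + move=> h2; have : ~~ P j.-1.
      apply/negP => Pj1; have := minj _ Pj1; lia.
    rewrite /P negb_or => /andP [_]; rewrite -ltNge.
    by have -> : j.-1.+1 = j by lia.
  + move=> h; move: Pj; rewrite /P => /orP [|//]; lia.
- by exists 0%N; split; [lia|].
Qed.

Lemma Cl_w0 n : Cl n 0 (0 : R) (-2).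
Proof. rewrite /Cl /= => -[h|[h _]]; lra. Qed.

Lemma Cl_wi n i : (1 <= i)%N -> (i <= n - 2)%N -> Cl n i (2 * i%:R : R) 2.
Proof.
move=> h1 h2; rewrite /Cl; have -> : (i == 0%N) = false by lia.
split.
- by left; lra.
- move=> _; have : (i.-1)%:R + 1 = i%:R :> R by rewrite -[i in RHS](@prednK i) ?natr1 //; lia.
  lra.
- move=> _; lra.
Qed.

Lemma Cl_wl n : (2 <= n)%N -> Cl n (n.-1) (2 : R) 0.
Proof.
move=> h; rewrite /Cl; have -> : (n.-1 == 0%N) = false by lia.
split.
- by right; split => //; lra.
- move=> _; lra.
- move=> h'; lia.
Qed.
End C.

Section S.
Variables (R : realType) (m : nat) (alpha : 'I_m -> R).
Variable ev : {mpoly rat[m]} -> R.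
Hypothesis evD : forall p q, ev (p + q) = ev p + ev q.
Hypothesis evM : forall p q, ev (p * q) = ev p * ev q.
Hypothesis evB : forall p q, ev (p - q) = ev p - ev q.
Hypothesis ev1 : ev 1 = 1.
Hypothesis ev0 : ev 0 = 0.
Hypothesis evX : forall i, ev 'X_i = alpha i.
Hypothesis evE : forall p, ev p = (map_mpoly (@ratr R) p).@[alpha].
Hypothesis ev_inj : forall p, p != 0 -> ev p != 0.
Lemma dX i j : mderiv i ('X_j : {mpoly rat[m]}) = (i == j)%:R.
Proof. rewrite mderivX mnm1E. case: eqP => [->|ne].
 have ->: (U_(i) - U_(i) = 0)%MM by apply/mnmP=> k; rewrite mnmBE mnm0E subnn.
   by rewrite mpolyX0 eqxx scale1r.
 have /negbTE -> : i != j by apply/eqP=> E; apply: ne; rewrite E.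
 by rewrite scale0r.
Qed.

Lemma d1 i : mderiv i (1 : {mpoly rat[m]}) = 0.
Proof. by rewrite -[1]/(1%:MP) mderivC. Qed.


Lemma ev_eq0 p : ev p = 0 -> p = 0.
Proof. move=> H; apply/eqP; apply: contraT => /ev_inj; by rewrite H eqxx. Qed.

Definition dl j p q := ev (mderiv j p) / ev p - ev (mderiv j q) / ev q.

Lemma dl_wd j p1 q1 p2 q2 : ev q1 != 0 -> ev q2 != 0 -> ev p1 / ev q1 != 0 ->
  ev p1 / ev q1 = ev p2 / ev q2 -> dl j p1 q1 = dl j p2 q2.
Proof.
move=> nq1 nq2 nx E.
have np1 : ev p1 != 0 by apply: contra nx => /eqP ->; rewrite mul0r.
have np2 : ev p2 != 0 by apply: contra nx => /eqP H; rewrite E H mul0r.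
have E2 : p1 * q2 = p2 * q1.
  apply/eqP; rewrite -subr_eq0; apply/eqP/ev_eq0.
  rewrite evB !evM; apply/eqP; rewrite subr_eq0; apply/eqP.
  by apply/eqP; rewrite -eqr_div // E.
have E3 := congr1 (fun r => ev (mderiv j r)) E2; move: E3 => /=.
rewrite !mderivM !evD !evM => E3.
have E4 : ev p1 * ev q2 = ev p2 * ev q1 by rewrite -!evM E2.
rewrite /dl.
set P1 := ev p1 in np1 E3 E4 *; set P2 := ev p2 in np2 E3 E4 *.
set Q1 := ev q1 in nq1 E3 E4 *; set Q2 := ev q2 in nq2 E3 E4 *.
set D1 := ev (mderiv j p1) in E3 *; set D2 := ev (mderiv j p2) in E3 *.
set G1 := ev (mderiv j q1) in E3 *; set G2 := ev (mderiv j q2) in E3 *.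
have HD2 : D2 = (D1 * Q2 + P1 * G2 - P2 * G1) / Q1 by rewrite E3 addrK mulfK.
have HP2 : P2 = P1 * Q2 / Q1 by rewrite E4 mulfK.
exact: alg_wd.
Qed.

Lemma X_neq0 j : ('X_j : {mpoly rat[m]}) != 0.
Proof. apply/eqP => H; have := (@mcoeffXU m rat j j); rewrite H mcoeff0 eqxx => /eqP. by rewrite eq_sym oner_eq0. Qed.

Lemma alpha_neq0 j : alpha j != 0.
Proof. by rewrite -evX; apply: ev_inj; apply: X_neq0. Qed.

Variables (i0 i1 : 'I_m).
Hypothesis i01 : i0 != i1.

Definition Rep (x u v : R) := exists p q, [/\ ev q != 0, x = ev p / ev q,
   u = alpha i0 * dl i0 p q & v = alpha i1 * dl i1 p q].

Lemma rep_uniq (x : R) u1 v1 u2 v2 : x != 0 -> Rep x u1 v1 -> Rep x u2 v2 -> u1 = u2 /\ v1 = v2.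
Proof.
move=> nx [p1 [q1 [h1 e1 -> ->]]] [p2 [q2 [h2 e2 -> ->]]].
have nx' : ev p1 / ev q1 != 0 by rewrite -e1.
have E : ev p1 / ev q1 = ev p2 / ev q2 by rewrite -e1 -e2.
by rewrite !(dl_wd _ h1 h2 nx' E).
Qed.

Lemma rep_num (x : R) p q : ev q != 0 -> x = ev p / ev q -> x != 0 -> ev p != 0.
Proof. by move=> _ -> nx; apply: contra nx => /eqP ->; rewrite mul0r. Qed.

Lemma rep_mul (x y : R) u1 v1 u2 v2 : x != 0 -> y != 0 -> Rep x u1 v1 -> Rep y u2 v2 ->
  Rep (x * y) (u1 + u2) (v1 + v2).
Proof.
move=> nx ny [p1 [q1 [h1 e1 -> ->]]] [p2 [q2 [h2 e2 -> ->]]].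
have n1 := rep_num h1 e1 nx; have n2 := rep_num h2 e2 ny.
exists (p1 * p2), (q1 * q2); split.
- by rewrite evM mulf_neq0.
- by rewrite e1 e2 !evM mulf_div.
- by rewrite /dl !mderivM !evD !evM alg_mul // -mulrDr.
- by rewrite /dl !mderivM !evD !evM alg_mul // -mulrDr.
Qed.

Lemma rep_add (x y : R) u1 v1 u2 v2 : 0 < x -> 0 < y -> Rep x u1 v1 -> Rep y u2 v2 ->
  Rep (x + y) (x / (x + y) * u1 + y / (x + y) * u2) (x / (x + y) * v1 + y / (x + y) * v2).
Proof.
move=> px py [p1 [q1 [h1 e1 -> ->]]] [p2 [q2 [h2 e2 -> ->]]].
have nx : x != 0 by rewrite gt_eqF.
have ny : y != 0 by rewrite gt_eqF.
have nxy : x + y != 0 by rewrite gt_eqF // addr_gt0.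
have n1 := rep_num h1 e1 nx; have n2 := rep_num h2 e2 ny.
have nS : ev p1 * ev q2 + ev p2 * ev q1 != 0.
  have -> : ev p1 * ev q2 + ev p2 * ev q1 = (x + y) * (ev q1 * ev q2).
    by rewrite e1 e2 alg_S.
  by rewrite !mulf_neq0.
exists (p1 * q2 + p2 * q1), (q1 * q2); split.
- by rewrite evM mulf_neq0.
- by rewrite e1 e2 evD !evM alg_S2.
- rewrite /dl !mderivD !mderivM !evD !evM e1 e2 alg_add //. by rewrite -e1 -e2.
- rewrite /dl !mderivD !mderivM !evD !evM e1 e2 alg_add //. by rewrite -e1 -e2.
Qed.

Lemma rep_inv (x : R) u v : x != 0 -> Rep x u v -> Rep x^-1 (- u) (- v).
Proof.
move=> nx [p [q [h e -> ->]]]; have n := rep_num h e nx.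
exists q, p; split => //; first by rewrite e invf_div.
- by rewrite /dl -mulrN opprB.
- by rewrite /dl -mulrN opprB.
Qed.

Lemma rep_1 : Rep 1 0 0.
Proof.
exists 1, 1; split.
- by rewrite ev1 oner_neq0.
- by rewrite ev1 divr1.
- by rewrite /dl d1 ev0 ev1 mul0r subrr mulr0.
- by rewrite /dl d1 ev0 ev1 mul0r subrr mulr0.
Qed.

Lemma rep_X0 : Rep (alpha i0) 1 0.
Proof.
have nz := alpha_neq0 i0.
exists 'X_i0, 1; split.
- by rewrite ev1 oner_neq0.
- by rewrite evX ev1 divr1.
- rewrite /dl d1 dX eqxx /= mulr1n evX ev0 ev1 mul0r subr0 mul1r.
  by rewrite mulfV.
- rewrite /dl d1 dX.
  have -> : (i1 == i0) = false by rewrite eq_sym (negbTE i01).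
  by rewrite /= mulr0n ev0 !mul0r subrr mulr0.
Qed.

Lemma rep_X1 : Rep (alpha i1) 0 1.
Proof.
have nz := alpha_neq0 i1.
exists 'X_i1, 1; split.
- by rewrite ev1 oner_neq0.
- by rewrite evX ev1 divr1.
- rewrite /dl d1 dX.
  have -> : (i0 == i1) = false by rewrite (negbTE i01).
  by rewrite /= mulr0n ev0 !mul0r subrr mulr0.
- rewrite /dl d1 dX eqxx /= mulr1n evX ev0 ev1 mul0r subr0 mul1r.
  by rewrite mulfV.
Qed.

Lemma rep_inK (x u v : R) : Rep x u v -> in_K alpha x.
Proof. by move=> [p [q [h e _ _]]]; exists p, q; rewrite -!evE. Qed.

Lemma rep_pow0 a : Rep (alpha i0 ^+ a) a%:R 0.
Proof.
elim: a => [|a IH]; first by rewrite expr0; exact: rep_1.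
have := rep_mul (alpha_neq0 i0) (expf_neq0 a (alpha_neq0 i0)) rep_X0 IH.
by rewrite -exprS addr0 -natr1 addrC.
Qed.

Lemma rep_pow1 b : Rep (alpha i1 ^+ b) 0 b%:R.
Proof.
elim: b => [|b IH]; first by rewrite expr0; exact: rep_1.
have := rep_mul (alpha_neq0 i1) (expf_neq0 b (alpha_neq0 i1)) rep_X1 IH.
by rewrite -exprS addr0 -natr1 addrC.
Qed.

Definition mono a b := alpha i0 ^+ a * alpha i1 ^+ b.
Lemma mono_neq0 a b : mono a b != 0.
Proof. by rewrite mulf_neq0 // expf_neq0 // alpha_neq0. Qed.
Lemma rep_mono a b : Rep (mono a b) a%:R b%:R.
Proof.
have := rep_mul (expf_neq0 a (alpha_neq0 i0)) (expf_neq0 b (alpha_neq0 i1)) (rep_pow0 a) (rep_pow1 b).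
by rewrite addr0 add0r.
Qed.
Definition wit a b := mono a b * mono a b.
Lemma wit_gt0 a b : 0 < wit a b.
Proof. by rewrite /wit -expr2 exprn_even_gt0 //= mono_neq0. Qed.
Lemma rep_wit a b : Rep (wit a b) (2 * a%:R) (2 * b%:R).
Proof.
have := rep_mul (mono_neq0 a b) (mono_neq0 a b) (rep_mono a b) (rep_mono a b).
by rewrite !mulr_natl !mulr2n.
Qed.

Definition Fam n (k : nat) (i : nat) (x : R) :=
  0 < x /\ exists u v, Rep x u v /\ Cl n i u (v - k%:R * u).

Lemma memF n k i (x u v : R) : Rep x u v -> 0 < x -> (Fam n k i x <-> Cl n i u (v - k%:R * u)).
Proof.
move=> r px; split.
- move=> [_ [u' [v' [r' c]]]].
  have [-> ->] := rep_uniq (lt0r_neq0 px) r r'. exact: c.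
- by move=> c; split => //; exists u, v.
Qed.

Lemma Fam_disj n k i j x : (i < n)%N -> (j < n)%N -> i != j -> Fam n k i x -> Fam n k j x -> False.
Proof.
move=> hi hj ij [px [u [v [r c]]]] /(memF n k j r px) c'.
exact: (Cl_disj hi hj ij c c').
Qed.

Lemma Fam_add n k i x y : Fam n k i x -> Fam n k i y -> Fam n k i (x + y).
Proof.
move=> [px [u1 [v1 [r1 c1]]]] [py [u2 [v2 [r2 c2]]]].
split; first by rewrite addr_gt0.
eexists; eexists; split; first exact: (rep_add px py r1 r2).
have pxy : 0 < x + y by rewrite addr_gt0.
have hl : 0 < x / (x + y) by rewrite divr_gt0.
have hm : 0 < y / (x + y) by rewrite divr_gt0.
set l := x / (x + y) in hl *; set mu := y / (x + y) in hm *.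
have -> : l * v1 + mu * v2 - k%:R * (l * u1 + mu * u2)
   = l * (v1 - k%:R * u1) + mu * (v2 - k%:R * u2) by ring.
exact: Cl_comb.
Qed.

Lemma Fam_mul n k i x y : Fam n k i x -> Fam n k i y -> Fam n k i (x * y).
Proof.
move=> [px [u1 [v1 [r1 c1]]]] [py [u2 [v2 [r2 c2]]]].
split; first by rewrite mulr_gt0.
exists (u1 + u2), (v1 + v2); split; first exact: (rep_mul (lt0r_neq0 px) (lt0r_neq0 py) r1 r2).
have := Cl_comb ltr01 ltr01 c1 c2; rewrite !mul1r.
by have -> : v1 + v2 - k%:R * (u1 + u2) = v1 - k%:R * u1 + (v2 - k%:R * u2) by ring.
Qed.

Lemma Fam_cover n k x : (2 <= n)%N -> in_Kplus alpha x -> exists i, (i < n)%N /\ Fam n k i x.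
Proof.
move=> n2 [[p [q [hq e]]] px]; rewrite -!evE in hq e.
have r : Rep x (alpha i0 * dl i0 p q) (alpha i1 * dl i1 p q) by exists p, q.
have [i [hi c]] := Cl_cover (alpha i0 * dl i0 p q) (alpha i1 * dl i1 p q - k%:R * (alpha i0 * dl i0 p q)) n2.
by exists i; split => //; apply/(memF n k i r px).
Qed.

Lemma Fam_ne n k i : (2 <= n)%N -> (i < n)%N -> exists x, Fam n k i x.
Proof.
move=> n2 hi.
case: (posnP i) => [->|i1p].
  have nz := lt0r_neq0 (wit_gt0 0 1).
  have r := rep_inv nz (rep_wit 0 1).
  exists (wit 0 1)^-1; apply/(memF n k 0 r); first by rewrite invr_gt0 wit_gt0.
  rewrite mulr0 oppr0 mulr0 subr0 mulr1; exact: Cl_w0.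
case: (leqP i (n - 2)) => hin.
  have r := rep_wit i (1 + k * i).
  exists (wit i (1 + k * i)); apply/(memF n k i r); first exact: wit_gt0.
  have -> : 2 * (1 + k * i)%:R - k%:R * (2 * i%:R) = 2 :> R by rewrite natrD natrM; ring.
  exact: Cl_wi.
have -> : i = n.-1 by lia.
have r := rep_wit 1 k.
exists (wit 1 k); apply/(memF n k n.-1 r); first exact: wit_gt0.
have -> : 2 * k%:R - k%:R * (2 * 1%:R) = 0 :> R by ring.
rewrite mulr1; exact: Cl_wl.
Qed.

Lemma Fam_z1 n k a : Fam n k 0 (wit 1 a) <-> (a < k)%N.
Proof.
rewrite (memF n k 0 (rep_wit 1 a) (wit_gt0 1 a)) /Cl /= mulr1 notPos.
have -> : 2 * a%:R - k%:R * 2 = 2 * (a%:R - k%:R) :> R by ring.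
split.
- move=> [h|[h h']]; last by lra.
  rewrite -(ltr_nat R); lra.
- by move=> h; left; rewrite -(ltr_nat R) in h; lra.
Qed.

Lemma core n : (2 <= n)%N ->
  exists F : nat -> 'I_n -> R -> Prop,
    (forall k, semiring_partition (in_Kplus alpha) (F k)) /\
    (forall k l, k <> l -> ~ same_blocks (F k) (F l)).
Proof.
move=> n2.
exists (fun k (i : 'I_n) x => Fam n k i x); split.
- move=> k; split.
  + move=> x; split.
    * move=> hx; have [i [hi c]] := Fam_cover k n2 hx.
      by exists (Ordinal hi).
    * move=> [i [px [u [v [r _]]]]]; split => //; exact: rep_inK r.
  + move=> i j x ij; apply: (Fam_disj (ltn_ord i) (ltn_ord j)) => //.
  + move=> i; exact: (Fam_ne k n2 (ltn_ord i)).
  + move=> i x y; exact: Fam_add.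
  + move=> i x y; exact: Fam_mul.
- move=> k l kl [H1 _].
  have n0 : (0 < n)%N by lia.
  have [j Hj] := H1 (Ordinal n0).
  have nz := lt0r_neq0 (wit_gt0 0 1).
  have z0k : forall k', Fam n k' 0 (wit 0 1)^-1.
    move=> k'; have r := rep_inv nz (rep_wit 0 1).
    apply/(memF n k' 0 r); first by rewrite invr_gt0 wit_gt0.
    rewrite mulr0 oppr0 mulr0 subr0 mulr1; exact: Cl_w0.
  have j0 : nat_of_ord j = 0%N.
    case: (eqVneq (nat_of_ord j) 0%N) => // jn0; exfalso.
    have Fj := (Hj _).1 (z0k k).
    exact: (Fam_disj (ltn_ord j) n0 jn0 Fj (z0k l)).
  have E := Hj (wit 1 (minn k l)); rewrite /= j0 in E.
  rewrite !Fam_z1 in E.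
  case: (ltngtP k l) => c.
  + have := E; rewrite (minn_idPl (ltnW c)) ltnn; move=> [_ h]; by move: (h c).
  + have := E; rewrite (minn_idPr (ltnW c)) ltnn; move=> [h _]; by move: (h c).
  + by apply: kl.
Qed.

End S.

Section Conc.
Variables (R : realType) (m : nat) (alpha : 'I_m -> R).
Definition evc (p : {mpoly rat[m]}) : R := (map_mpoly (@ratr R) p).@[alpha].
Lemma evcD p q : evc (p + q) = evc p + evc q.
Proof. by rewrite /evc rmorphD /= mevalD. Qed.
Lemma evcM p q : evc (p * q) = evc p * evc q.
Proof. by rewrite /evc rmorphM /= mevalM. Qed.
Lemma evcB p q : evc (p - q) = evc p - evc q.
Proof. by rewrite /evc rmorphB /= mevalB. Qed.
Lemma evc1 : evc 1 = 1.
Proof. by rewrite /evc rmorph1 /= meval1. Qed.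
Lemma evc0 : evc 0 = 0.
Proof. by rewrite /evc rmorph0 /= meval0. Qed.
Lemma evcX i : evc 'X_i = alpha i.
Proof. by rewrite /evc map_mpolyX mevalXU. Qed.
End Conc.

Unset Implicit Arguments.

Theorem proposition2p3 (R : realType) (m : nat) (alpha : 'I_m -> R) :
  (2 <= m)%N -> alg_indep_Q alpha ->
  forall n : nat, (2 <= n)%N ->
  exists F : nat -> 'I_n -> R -> Prop,
    (forall k, semiring_partition (in_Kplus alpha) (F k)) /\
    (forall k l, k <> l -> ~ same_blocks (F k) (F l)).
Proof.
move=> m2 Hind n n2.
have h0 : (0 < m)%N by lia.
have h1 : (1 < m)%N by lia.
pose i0 : 'I_m := Ordinal h0.
pose i1 : 'I_m := Ordinal h1.
have i01 : i0 != i1 by [].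
exact: (@core R m alpha (evc alpha) (@evcD R m alpha) (@evcM R m alpha) (@evcB R m alpha)
  (@evc1 R m alpha) (@evc0 R m alpha) (@evcX R m alpha) (fun p => erefl) Hind i0 i1 i01 n n2).
Qed.
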